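(* Let $A\in\mathrm{SL}(2,\mathbb R)$ and $\alpha\in\mathbb R$. Then either $\alpha$ is the slope of a vector of $A\Lambda_q$ (i.e. $\alpha=a/q$ for some $(q,a)^T\in A\Lambda_q$ with $q\ne0$), or there exist infinitely many $(q,a)^T\in A\Lambda_q$ with $q>0$ such that $$\left|\alpha-\frac aq\right|\le\frac1{2q^2}.$$
   Context: Fix an integer $q\ge3$ (used only as the index of the group; coordinates of vectors are written $(q,a)^T$ by abuse of notation), let $\lambda_q=2\cos(\pi/q)$, and let $G_q\subset \mathrm{SL}(2,\mathbb R)$ be the Hecke triangle group generated by $S=\begin{pmatrix}0&-1\\1&0\end{pmatrix}$ and $T_q=\begin{pmatrix}1&\lambda_q\\0&1\end{pmatrix}$, acting linearly on $\mathbb R^2$; $\Lambda_q=G_q(1,0)^T$, $A\Lambda_q=\{A\mathbf v:\mathbf v\in\Lambda_q\}$. *)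

(* Defs.v *)
From Stdlib Require Import Reals List.
Open Scope R_scope.

Record mat2 := Mat2 { m11 : R; m12 : R; m21 : R; m22 : R }.

Definition mmul (A B : mat2) : mat2 :=
  Mat2 (m11 A * m11 B + m12 A * m21 B) (m11 A * m12 B + m12 A * m22 B)
       (m21 A * m11 B + m22 A * m21 B) (m21 A * m12 B + m22 A * m22 B).

Definition mapply (A : mat2) (v : R * R) : R * R :=
  (m11 A * fst v + m12 A * snd v, m21 A * fst v + m22 A * snd v).

Definition det2 (A : mat2) : R := m11 A * m22 A - m12 A * m21 A.

Definition in_SL2 (A : mat2) : Prop := det2 A = 1.

Definition I2 : mat2 := Mat2 1 0 0 1.
Definition Smat : mat2 := Mat2 0 (-1) 1 0.
Definition Sinv : mat2 := Mat2 0 1 (-1) 0.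

Definition lambda (q : nat) : R := 2 * cos (PI / INR q).
Definition Tmat (q : nat) : mat2 := Mat2 1 (lambda q) 0 1.
Definition Tinv (q : nat) : mat2 := Mat2 1 (- lambda q) 0 1.

Inductive in_Gq (q : nat) : mat2 -> Prop :=
| Gq_id : in_Gq q I2
| Gq_S : forall M, in_Gq q M -> in_Gq q (mmul Smat M)
| Gq_Sinv : forall M, in_Gq q M -> in_Gq q (mmul Sinv M)
| Gq_T : forall M, in_Gq q M -> in_Gq q (mmul (Tmat q) M)
| Gq_Tinv : forall M, in_Gq q M -> in_Gq q (mmul (Tinv q) M).

Definition in_Lambda (q : nat) (v : R * R) : Prop :=
  exists g, in_Gq q g /\ v = mapply g (1, 0).

Definition in_ALambda (q : nat) (A : mat2) (v : R * R) : Prop :=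
  exists w, in_Lambda q w /\ v = mapply A w.

Definition infinitely_many (P : R * R -> Prop) : Prop :=
  ~ exists l : list (R * R), forall v, P v -> In v l.

(* Main.v *)
Require Import Defs.
From Stdlib Require Import Reals List Lra Lia Psatz ZArith Classical.
Open Scope R_scope.

Lemma mat_ext (M N : mat2) : m11 M = m11 N -> m12 M = m12 N -> m21 M = m21 N -> m22 M = m22 N -> M = N.
Proof. destruct M, N; simpl; intros; subst; reflexivity. Qed.

Lemma mmul_assoc a b c : mmul (mmul a b) c = mmul a (mmul b c).
Proof. apply mat_ext; simpl; ring. Qed.

Lemma Gq_mul q g h : in_Gq q g -> in_Gq q h -> in_Gq q (mmul g h).
Proof.
  intros Hg Hh; induction Hg.
  - replace (mmul I2 h) with h by (apply mat_ext; unfold I2; simpl; ring). exact Hh.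
  - rewrite mmul_assoc; constructor; auto.
  - rewrite mmul_assoc; constructor; auto.
  - rewrite mmul_assoc; constructor; auto.
  - rewrite mmul_assoc; constructor; auto.
Qed.

Lemma Gq_S q : in_Gq q Smat.
Proof. replace Smat with (mmul Smat I2) by (apply mat_ext; unfold Smat, I2; simpl; ring). constructor. constructor. Qed.
Lemma Gq_T q : in_Gq q (Tmat q).
Proof. replace (Tmat q) with (mmul (Tmat q) I2) by (apply mat_ext; unfold Tmat, I2; simpl; ring). constructor. constructor. Qed.
Lemma Gq_Ti q : in_Gq q (Tinv q).
Proof. replace (Tinv q) with (mmul (Tinv q) I2) by (apply mat_ext; unfold Tinv, I2; simpl; ring). constructor. constructor. Qed.

Lemma det_mul a b : det2 (mmul a b) = det2 a * det2 b.
Proof. unfold det2; simpl; ring. Qed.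

Lemma Gq_det q g : in_Gq q g -> det2 g = 1.
Proof.
  induction 1.
  - unfold det2, I2; simpl; ring.
  - rewrite det_mul, IHin_Gq; unfold det2, Smat; simpl; ring.
  - rewrite det_mul, IHin_Gq; unfold det2, Sinv; simpl; ring.
  - rewrite det_mul, IHin_Gq; unfold det2, Tmat; simpl; ring.
  - rewrite det_mul, IHin_Gq; unfold det2, Tinv; simpl; ring.
Qed.

Definition Edge q A (u v : R * R) : Prop :=
  exists g, in_Gq q g /\ u = mapply A (mapply g (1,0)) /\ v = mapply A (mapply g (0,1)).
Definition vopp (u : R*R) : R*R := (- fst u, - snd u).
Definition vcomb (a : R) (u : R*R) (b : R) (v : R*R) : R*R :=
  (a * fst u + b * fst v, a * snd u + b * snd v).

Lemma Edge_proper q A u v u' v' : Edge q A u v -> u = u' -> v = v' -> Edge q A u' v'.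
Proof. intros H -> ->; exact H. Qed.

Lemma Edge_S q A u v : Edge q A u v -> Edge q A v (vopp u).
Proof.
  intros [g [Hg [Hu Hv]]]. exists (mmul g Smat). split. apply Gq_mul; auto; apply Gq_S.
  subst; split; unfold mapply, mmul, Smat, vopp; simpl; f_equal; ring.
Qed.

Lemma Edge_T q A u v : Edge q A u v -> Edge q A u (vcomb 1 v (lambda q) u).
Proof.
  intros [g [Hg [Hu Hv]]]. exists (mmul g (Tmat q)). split. apply Gq_mul; auto; apply Gq_T.
  subst; split; unfold mapply, mmul, Tmat, vcomb; simpl; f_equal; ring.
Qed.

Lemma Edge_Ti q A u v : Edge q A u v -> Edge q A u (vcomb 1 v (- lambda q) u).
Proof.
  intros [g [Hg [Hu Hv]]]. exists (mmul g (Tinv q)). split. apply Gq_mul; auto; apply Gq_Ti.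
  subst; split; unfold mapply, mmul, Tinv, vcomb; simpl; f_equal; ring.
Qed.

Lemma Edge_Tnat q A u v : Edge q A u v -> forall n : nat,
  Edge q A u (vcomb 1 v (INR n * lambda q) u) /\ Edge q A u (vcomb 1 v (- (INR n * lambda q)) u).
Proof.
  intros H n; induction n as [|n [IH1 IH2]].
  - split; eapply Edge_proper; try exact H; try reflexivity;
      unfold vcomb; simpl; destruct v; simpl; f_equal; ring.
  - split.
    + eapply Edge_proper; [apply (Edge_T _ _ _ _ IH1)|reflexivity|].
      unfold vcomb; rewrite S_INR; cbn [fst snd]; f_equal; ring.
    + eapply Edge_proper; [apply (Edge_Ti _ _ _ _ IH2)|reflexivity|].
      unfold vcomb; rewrite S_INR; cbn [fst snd]; f_equal; ring.
Qed.

Lemma Edge_Tn q A u v (n : Z) : Edge q A u v -> Edge q A u (vcomb 1 v (IZR n * lambda q) u).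
Proof.
  intros H. destruct (Edge_Tnat q A u v H (Z.to_nat (Z.abs n))) as [H1 H2].
  destruct (Z_le_gt_dec 0 n).
  - eapply Edge_proper; [exact H1|reflexivity|].
    rewrite INR_IZR_INZ, Z2Nat.id by lia. rewrite Z.abs_eq by lia. reflexivity.
  - eapply Edge_proper; [exact H2|reflexivity|].
    rewrite INR_IZR_INZ, Z2Nat.id by lia. rewrite Z.abs_neq by lia.
    rewrite opp_IZR. unfold vcomb; f_equal; ring.
Qed.

Lemma Edge_base q A : Edge q A (mapply A (1,0)) (mapply A (0,1)).
Proof. exists I2; split; [constructor|]; split; unfold mapply, I2; simpl; f_equal; ring. Qed.

Lemma Edge_in1 q A u v : Edge q A u v -> in_ALambda q A u.
Proof. intros [g [Hg [Hu Hv]]]. exists (mapply g (1,0)); split; auto. exists g; auto. Qed.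

Lemma Edge_in2 q A u v : Edge q A u v -> in_ALambda q A v.
Proof. intros H; exact (Edge_in1 _ _ _ _ (Edge_S _ _ _ _ H)). Qed.

Lemma ALam_edge q A w : in_ALambda q A w -> exists v, Edge q A w v.
Proof.
  intros [x [[g [Hg Hx]] Hw]]. exists (mapply A (mapply g (0,1))). exists g; subst; auto.
Qed.

Lemma ALam_opp q A w : in_ALambda q A w -> in_ALambda q A (vopp w).
Proof.
  intros H; destruct (ALam_edge _ _ _ H) as [v Hv].
  exact (Edge_in2 _ _ _ _ (Edge_S _ _ _ _ Hv)).
Qed.

Lemma Edge_det q A u v : in_SL2 A -> Edge q A u v -> fst u * snd v - snd u * fst v = 1.
Proof.
  intros hA [g [Hg [Hu Hv]]]; subst.
  transitivity (det2 A * det2 g). unfold det2, mapply; simpl; ring.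
  unfold in_SL2 in hA. rewrite hA, (Gq_det q g Hg); ring.
Qed.

Fixpoint pp (q : nat) (k : nat) {struct k} : R :=
  match k with
  | O => 0
  | S k' => match k' with O => 1 | S k'' => lambda q * pp q k' - pp q k'' end
  end.
Definition pm (q k : nat) : R := match k with O => -1 | S k' => pp q k' end.

Lemma pp_rec q k : pp q (S k) = lambda q * pp q k - pm q k.
Proof. destruct k; simpl; [ring | reflexivity]. Qed.

Lemma pp_rec2 q k : pp q (S (S k)) = lambda q * pp q (S k) - pp q k.
Proof. reflexivity. Qed.


Lemma th_facts q : (3 <= q)%nat ->
  0 < PI / INR q /\ PI / INR q <= PI / 3 /\ INR q * (PI / INR q) = PI.
Proof.
  intros hq. assert (Hq : 3 <= INR q) by (replace 3 with (INR 3) by (simpl; ring); apply le_INR; auto).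
  pose proof PI_RGT_0. split; [|split].
  - apply Rdiv_lt_0_compat; lra.
  - unfold Rdiv; apply Rmult_le_compat_l; [lra|]. apply Rinv_le_contravar; lra.
  - field; lra.
Qed.

Lemma sin_th_pos q : (3 <= q)%nat -> 0 < sin (PI / INR q).
Proof. intros hq; destruct (th_facts q hq) as [H1 [H2 H3]]. apply sin_gt_0; pose proof PI_RGT_0; lra. Qed.

Lemma lam_bounds q : (3 <= q)%nat -> 0 < lambda q < 2.
Proof.
  intros hq; destruct (th_facts q hq) as [H1 [H2 H3]]. pose proof PI_RGT_0.
  assert (Hc : 0 < cos (PI / INR q)) by (apply cos_gt_0; lra).
  pose proof (sin_th_pos q hq). pose proof (sin2_cos2 (PI / INR q)). unfold Rsqr in *.
  unfold lambda; split; nra.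
Qed.

Lemma pp_sin q : (3 <= q)%nat -> forall k, pp q k = sin (INR k * (PI / INR q)) / sin (PI / INR q).
Proof.
  intros hq. pose proof (sin_th_pos q hq) as Hs. set (t := PI / INR q) in *.
  assert (forall k, pp q k = sin (INR k * t) / sin t /\ pp q (S k) = sin (INR (S k) * t) / sin t).
  { induction k as [|k [IH1 IH2]].
    - split; simpl. replace (0 * t) with 0 by ring. rewrite sin_0; field; lra.
      replace (1 * t) with t by ring. field; lra.
    - split; [exact IH2|]. rewrite pp_rec2, IH1, IH2.
      assert (E1: INR (S (S k)) * t = INR (S k) * t + t) by (rewrite (S_INR (S k)); ring).
      assert (E2: INR k * t = INR (S k) * t - t) by (rewrite (S_INR k); ring).
      rewrite E1, E2, sin_plus, sin_minus. unfold lambda. fold t. field; lra. }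
  intros k; apply H.
Qed.

Lemma pp_q q : (3 <= q)%nat -> pp q q = 0.
Proof.
  intros hq; rewrite pp_sin by auto. destruct (th_facts q hq) as [H1 [H2 H3]].
  rewrite H3, sin_PI. unfold Rdiv; ring.
Qed.

Lemma pp_ge1 q k : (3 <= q)%nat -> (1 <= k)%nat -> (k < q)%nat -> 1 <= pp q k.
Proof.
  intros hq hk1 hk2. rewrite pp_sin by auto. pose proof (sin_th_pos q hq) as Hs.
  destruct (th_facts q hq) as [H1 [H2 H3]]. pose proof PI_RGT_0.
  set (t := PI / INR q) in *.
  assert (Hk1 : 1 <= INR k) by (replace 1 with (INR 1) by reflexivity; apply le_INR; auto).
  assert (Hk2 : INR k <= INR q - 1).
  { assert (INR (S k) <= INR q) by (apply le_INR; lia). rewrite S_INR in H0; lra. }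
  assert (Hx1 : t <= INR k * t) by nra.
  assert (Hx2 : INR k * t <= PI - t) by nra.
  assert (Hsin : sin t <= sin (INR k * t)).
  { destruct (Rle_dec (INR k * t) (PI / 2)).
    - apply sin_incr_1; lra.
    - rewrite <- (sin_PI_x (INR k * t)). apply sin_incr_1; lra. }
  apply (Rmult_le_reg_r (sin t)); auto. unfold Rdiv. rewrite Rmult_assoc, Rinv_l; lra.
Qed.

Lemma pp_ge0 q k : (3 <= q)%nat -> (k <= q)%nat -> 0 <= pp q k.
Proof.
  intros hq hk. destruct k. simpl; lra.
  destruct (Nat.eq_dec (S k) q) as [->|]. rewrite pp_q; auto; lra.
  pose proof (pp_ge1 q (S k) hq ltac:(lia) ltac:(lia)); lra.
Qed.

Definition Yc (alpha : R) (v : R * R) : R := snd v - alpha * fst v.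
Definition avert q u v k := vcomb (pp q (S k)) u (pp q k) v.
Definition bvert q u v k := vopp (vcomb (pp q k) u (pm q k) v).

Lemma poly_edges q A u v : Edge q A u v -> forall k,
  Edge q A (avert q u v k) (bvert q u v k) /\ Edge q A (avert q u v k) (avert q u v (S k)).
Proof.
  intros H k. induction k as [|k [IH1 IH2]].
  - assert (E0 : Edge q A (avert q u v 0) (bvert q u v 0)).
    { eapply Edge_proper; [exact H| |]; unfold avert, bvert, vcomb, vopp; simpl; destruct u, v; simpl; f_equal; ring. }
    split; auto.
    eapply Edge_proper; [apply (Edge_T _ _ _ _ E0)|reflexivity|].
    unfold avert, bvert, vcomb, vopp; simpl; f_equal; ring.
  - assert (E1 : Edge q A (avert q u v (S k)) (bvert q u v (S k))).
    { eapply Edge_proper; [apply (Edge_S _ _ _ _ IH2)|reflexivity|].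
      unfold bvert, avert. change (pm q (S k)) with (pp q k). reflexivity. }
    split; auto.
    eapply Edge_proper; [apply (Edge_T _ _ _ _ E1)|reflexivity|].
    unfold avert, bvert, vcomb, vopp; cbn [fst snd].
    rewrite (pp_rec2 q (S k)), (pp_rec q (S k)).
    change (pm q (S k)) with (pp q k). f_equal; ring.
Qed.

Lemma sign_change (f : nat -> R) a n :
  (forall j, (a <= j <= a + n)%nat -> f j <> 0) -> f a * f (a + n)%nat < 0 ->
  exists k, (a <= k < a + n)%nat /\ f k * f (S k) < 0.
Proof.
  induction n as [|n IH]; intros Hnz Hneg.
  - rewrite Nat.add_0_r in Hneg. nra.
  - destruct (Rlt_dec (f a * f (a + n)%nat) 0) as [Hl|Hl].
    + destruct IH as [k [Hk1 Hk2]]; auto. intros j Hj; apply Hnz; lia. exists k; split; auto; lia.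
    + exists (a + n)%nat. split; [lia|].
      rewrite Nat.add_succ_r in Hneg.
      assert (f a <> 0) by (apply Hnz; lia). assert (f (a + n)%nat <> 0) by (apply Hnz; lia).
      assert (0 < f a * f (a + n)%nat).
      { destruct (Rle_lt_dec (f a * f (a+n)%nat) 0); [|auto].
        exfalso. assert (f a * f (a+n)%nat <> 0) by (apply Rmult_integral_contrapositive; auto). lra. }
      assert (0 < f a * f a) by nra.
      nra.
Qed.

Lemma sign_change' (f : nat -> R) a b : (a <= b)%nat ->
  (forall j, (a <= j <= b)%nat -> f j <> 0) -> f a * f b < 0 ->
  exists k, (a <= k < b)%nat /\ f k * f (S k) < 0.
Proof.
  intros Hab. replace b with (a + (b - a))%nat by lia. apply sign_change.
Qed.

Definition NonSlope q A alpha :=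
  forall v, in_ALambda q A v -> fst v <> 0 -> Yc alpha v <> 0.

Lemma vec_nz q A alpha : in_SL2 A -> NonSlope q A alpha ->
  forall w, in_ALambda q A w -> Yc alpha w <> 0.
Proof.
  intros hA H w Hw. destruct (Req_dec (fst w) 0) as [H0|H0]; [|apply H; auto].
  destruct (ALam_edge _ _ _ Hw) as [v Hv]. pose proof (Edge_det _ _ _ _ hA Hv) as Hd.
  unfold Yc. rewrite H0 in *. intro Hc. nra.
Qed.

Lemma Yc_comb alpha a u b v : Yc alpha (vcomb a u b v) = a * Yc alpha u + b * Yc alpha v.
Proof. unfold Yc, vcomb; simpl; ring. Qed.

Lemma chain_step q A alpha u v : (3 <= q)%nat -> in_SL2 A -> NonSlope q A alpha ->
  Edge q A u v -> 0 < fst u -> 0 < fst v -> Yc alpha u * Yc alpha v < 0 ->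
  exists u' v', Edge q A u' v' /\ 0 < fst u' /\ 0 < fst v' /\ Yc alpha u' * Yc alpha v' < 0 /\
    Rmin (fst u) (fst v) <= fst u' /\ Rmin (fst u) (fst v) <= fst v' /\
    fst u + fst v + Rmin (fst u) (fst v) <= fst u' + fst v'.
Proof.
  intros hq hA H He Hu Hv Hy.
  set (f := fun k => Yc alpha (avert q u v k)).
  destruct (sign_change' f 0 (q - 1)) as [k [Hk1 Hk2]].
  - lia.
  - intros j Hj. unfold f. apply (vec_nz q A alpha hA H).
    exact (Edge_in1 _ _ _ _ (proj1 (poly_edges q A u v He j))).
  - unfold f, avert. replace (S (q - 1)) with q by lia. rewrite !Yc_comb, pp_q by auto.
    simpl pp. pose proof (pp_ge1 q (q - 1) hq ltac:(lia) ltac:(lia)). nra.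
  - exists (avert q u v k), (avert q u v (S k)).
    pose proof (pp_ge1 q (S k) hq ltac:(lia) ltac:(lia)) as P1.
    pose proof (pp_ge0 q k hq ltac:(lia)) as P0.
    pose proof (pp_ge0 q (S (S k)) hq ltac:(lia)) as P2.
    assert (P3 : 1 <= pp q k \/ 1 <= pp q (S (S k))).
    { destruct k. right; apply pp_ge1; lia. left; apply pp_ge1; lia. }
    pose proof (Rmin_l (fst u) (fst v)). pose proof (Rmin_r (fst u) (fst v)).
    unfold avert, vcomb; cbn [fst snd].
    split; [exact (proj2 (poly_edges q A u v He k))|].
    split; [nra|]. split; [nra|]. split; [exact Hk2|].
    split; [nra|]. split; [nra|]. destruct P3; nra.
Qed.

Lemma chain q A alpha u0 v0 : (3 <= q)%nat -> in_SL2 A -> NonSlope q A alpha ->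
  Edge q A u0 v0 -> 0 < fst u0 -> 0 < fst v0 -> Yc alpha u0 * Yc alpha v0 < 0 ->
  forall n : nat, exists u v, Edge q A u v /\ 0 < fst u /\ 0 < fst v /\ Yc alpha u * Yc alpha v < 0 /\
    INR n * Rmin (fst u0) (fst v0) <= fst u + fst v.
Proof.
  intros hq hA H He Hu Hv Hy.
  set (mu := Rmin (fst u0) (fst v0)).
  assert (Hmu : 0 < mu) by (unfold mu; apply Rmin_glb_lt; auto).
  assert (G : forall n : nat, exists u v, Edge q A u v /\ 0 < fst u /\ 0 < fst v /\ Yc alpha u * Yc alpha v < 0 /\
    mu <= fst u /\ mu <= fst v /\ INR n * mu <= fst u + fst v).
  { induction n as [|n IH].
    - exists u0, v0. unfold mu; repeat split; auto using Rmin_l, Rmin_r. simpl; lra.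
    - destruct IH as [u [v [E [H1 [H2 [H3 [H4 [H5 H6]]]]]]]].
      destruct (chain_step q A alpha u v hq hA H E H1 H2 H3) as [u' [v' [E' [G1 [G2 [G3 [G4 [G5 G6]]]]]]]].
      assert (mu <= Rmin (fst u) (fst v)) by (apply Rmin_glb; auto).
      exists u', v'; repeat split; auto; try lra. rewrite S_INR; lra. }
  intros n; destruct (G n) as [u [v [E [H1 [H2 [H3 [H4 [H5 H6]]]]]]]]. exists u, v; repeat split; auto.
Qed.

Lemma Yc_opp alpha v : Yc alpha (vopp v) = - Yc alpha v.
Proof. unfold Yc, vopp; simpl; ring. Qed.

Lemma norm_start q A alpha a b : Edge q A a b ->
  fst a * fst b * Yc alpha a * Yc alpha b < 0 ->
  exists u v, Edge q A u v /\ 0 < fst u /\ 0 < fst v /\ Yc alpha u * Yc alpha v < 0.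
Proof.
  intros E Hc.
  assert (fst a <> 0) by (intro Z; rewrite Z in Hc; nra).
  assert (fst b <> 0) by (intro Z; rewrite Z in Hc; nra).
  pose proof (Edge_S _ _ _ _ E) as E1. pose proof (Edge_S _ _ _ _ E1) as E2.
  pose proof (Edge_S _ _ _ _ E2) as E3.
  destruct (Rlt_dec 0 (fst a * fst b)) as [Hp|Hp].
  - assert (Yc alpha a * Yc alpha b < 0) by nra.
    destruct (Rlt_dec 0 (fst a)).
    + exists a, b; repeat split; auto; nra.
    + exists (vopp a), (vopp b); split; [auto|]. rewrite !Yc_opp. unfold vopp; simpl.
      repeat split; nra.
  - assert (fst a * fst b < 0) by (assert (fst a * fst b <> 0) by (apply Rmult_integral_contrapositive; auto); lra).
    assert (0 < Yc alpha a * Yc alpha b) by nra.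
    destruct (Rlt_dec 0 (fst b)).
    + exists b, (vopp a); split; [auto|]. rewrite !Yc_opp. unfold vopp; simpl.
      repeat split; nra.
    + exists (vopp b), a; split.
      * eapply Edge_proper; [exact E3|reflexivity|]. unfold vopp; destruct a; simpl; f_equal; ring.
      * rewrite !Yc_opp. unfold vopp; simpl. repeat split; nra.
Qed.

Lemma caseA q A alpha u0 : (3 <= q)%nat -> in_SL2 A -> NonSlope q A alpha ->
  in_ALambda q A u0 -> fst u0 = 0 ->
  exists a b, Edge q A a b /\ fst a * fst b * Yc alpha a * Yc alpha b < 0.
Proof.
  intros hq hA H Hu0 H0.
  destruct (ALam_edge _ _ _ Hu0) as [v Ev]. pose proof (Edge_det _ _ _ _ hA Ev) as Hd.
  rewrite H0 in Hd.
  set (Y0 := Yc alpha u0).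
  assert (HY0 : Y0 = snd u0) by (unfold Y0, Yc; rewrite H0; ring).
  assert (Hv0 : fst v <> 0) by (intro Z; rewrite Z in Hd; nra).
  assert (HY0nz : Y0 <> 0) by (rewrite HY0; intro Z; rewrite Z in Hd; nra).
  destruct (lam_bounds q hq) as [Hl1 Hl2].
  set (r := - Yc alpha v / (lambda q * Y0)).
  set (n := (up r - 1)%Z).
  destruct (archimed r) as [Ar1 Ar2].
  assert (Hz : IZR n = IZR (up r) - 1) by (unfold n; rewrite minus_IZR; reflexivity).
  set (z := IZR n) in *.
  set (vn := vcomb 1 v (z * lambda q) u0).
  assert (Evn : Edge q A u0 vn) by (apply Edge_Tn; auto).
  assert (HYvn : Yc alpha vn = lambda q * Y0 * (z - r)).
  { unfold vn; rewrite Yc_comb. fold Y0. unfold r. field. split; auto; lra. }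
  assert (HXvn : fst vn = fst v) by (unfold vn, vcomb; simpl; rewrite H0; ring).
  clearbody vn.
  pose proof (poly_edges q A u0 vn Evn) as PE.
  set (f := fun k => Yc alpha (avert q u0 vn k)).
  assert (Fnz : forall j, f j <> 0).
  { intros j; unfold f; apply (vec_nz q A alpha hA H). exact (Edge_in1 _ _ _ _ (proj1 (PE j))). }
  assert (F1 : f 1%nat = lambda q * Y0 * (z + 1 - r)).
  { unfold f, avert; rewrite Yc_comb. fold Y0. rewrite HYvn. simpl pp. ring. }
  assert (Fq : f (q - 1)%nat = pp q (q - 1) * Yc alpha vn).
  { unfold f, avert; rewrite Yc_comb. replace (S (q - 1)) with q by lia. rewrite pp_q by auto. ring. }
  assert (Hvnnz : Yc alpha vn <> 0) by (apply (vec_nz q A alpha hA H); exact (Edge_in2 _ _ _ _ Evn)).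
  assert (Hprod : f 1%nat * Yc alpha vn < 0).
  { assert (f 1%nat * Yc alpha vn <> 0) by (apply Rmult_integral_contrapositive; split; auto).
    assert (f 1%nat * Yc alpha vn <= 0).
    { rewrite F1, HYvn. assert (0 <= (lambda q * Y0) * (lambda q * Y0)) by nra.
      assert ((z + 1 - r) * (z - r) <= 0) by nra. nra. }
    lra. }
  pose proof (pp_ge1 q (q - 1) hq ltac:(lia) ltac:(lia)) as Pq1.
  destruct (sign_change' f 1 (q - 1)) as [k [Hk1 Hk2]].
  - lia.
  - intros j _; apply Fnz.
  - rewrite Fq. nra.
  - exists (avert q u0 vn k), (avert q u0 vn (S k)). split; [exact (proj2 (PE k))|].
    unfold f in Hk2.
    pose proof (pp_ge1 q k hq ltac:(lia) ltac:(lia)).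
    pose proof (pp_ge1 q (S k) hq ltac:(lia) ltac:(lia)).
    assert (Hx : forall j, fst (avert q u0 vn j) = pp q j * fst v).
    { intros j; unfold avert, vcomb; simpl fst; rewrite H0, HXvn; ring. }
    rewrite !Hx.
    assert (0 < fst v * fst v) by nra.
    assert (0 < pp q k * pp q (S k)) by nra.
    assert (0 < pp q k * fst v * (pp q (S k) * fst v)).
    { replace (pp q k * fst v * (pp q (S k) * fst v)) with ((pp q k * pp q (S k)) * (fst v * fst v)) by ring.
      apply Rmult_lt_0_compat; auto. }
    set (P := pp q k * fst v * (pp q (S k) * fst v)) in *.
    replace (pp q k * fst v * (pp q (S k) * fst v) * Yc alpha (avert q u0 vn k) * Yc alpha (avert q u0 vn (S k)))
      with (P * (Yc alpha (avert q u0 vn k) * Yc alpha (avert q u0 vn (S k)))) by (unfold P; ring).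
    nra.
Qed.

Definition tt alpha (w : R * R) := Rabs (fst w * Yc alpha w).

Lemma goodw q A alpha : (3 <= q)%nat ->
  exists w, in_ALambda q A w /\
   (tt alpha w < 1 / lambda q \/
    forall w', in_ALambda q A w' -> (lambda q * lambda q / 4) * tt alpha w <= tt alpha w').
Proof.
  intros hq. destruct (lam_bounds q hq) as [Hl1 Hl2].
  set (c := lambda q * lambda q / 4).
  assert (Hc1 : 0 < c) by (unfold c; nra). assert (Hc2 : c < 1) by (unfold c; nra).
  destruct (classic (exists w, in_ALambda q A w /\ tt alpha w < 1 / lambda q)) as [[w [Hw Ht]]|Hno].
  { exists w; auto. }
  assert (Hge : forall w, in_ALambda q A w -> 1 / lambda q <= tt alpha w).
  { intros w Hw. destruct (Rlt_dec (tt alpha w) (1 / lambda q)) as [h|h]; [|lra].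
    exfalso; apply Hno; eauto. }
  set (E := fun x => exists w, in_ALambda q A w /\ x = - tt alpha w).
  assert (Hb : bound E).
  { exists 0. intros x [w [_ ->]]. unfold tt. pose proof (Rabs_pos (fst w * Yc alpha w)); lra. }
  assert (Hne : exists x, E x).
  { exists (- tt alpha (mapply A (1,0))). exists (mapply A (1,0)); split; auto.
    exact (Edge_in1 _ _ _ _ (Edge_base q A)). }
  destruct (completeness E Hb Hne) as [s [Hub Hlub]].
  assert (Hs : s <= - (1 / lambda q)).
  { apply Hlub. intros x [w [Hw ->]]. pose proof (Hge w Hw); lra. }
  assert (Hl3 : 0 < 1 / lambda q) by (apply Rdiv_lt_0_compat; lra).
  set (m := - s).
  destruct (classic (exists w, in_ALambda q A w /\ tt alpha w < m / c)) as [[w [Hw Ht]]|Hno2].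
  - exists w; split; auto; right. intros w' Hw'.
    assert (- tt alpha w' <= s) by (apply Hub; exists w'; auto).
    assert (c * tt alpha w < c * (m / c)) by (apply Rmult_lt_compat_l; auto).
    replace (c * (m / c)) with m in H0 by (field; lra). unfold m in *; lra.
  - exfalso.
    assert (s <= - (m / c)).
    { apply Hlub. intros x [w [Hw ->]].
      destruct (Rlt_dec (tt alpha w) (m / c)) as [h|h]; [exfalso; apply Hno2; eauto|lra]. }
    assert (m < m / c).
    { apply (Rmult_lt_reg_r c); auto. replace (m / c * c) with m by (field; lra).
      unfold m; nra. }
    unfold m in *; lra.
Qed.

Lemma caseB q A alpha : (3 <= q)%nat -> in_SL2 A -> NonSlope q A alpha ->
  (forall w, in_ALambda q A w -> fst w <> 0) ->
  exists a b, Edge q A a b /\ fst a * fst b * Yc alpha a * Yc alpha b < 0.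
Proof.
  intros hq hA H HX. destruct (lam_bounds q hq) as [Hl1 Hl2].
  destruct (goodw q A alpha hq) as [w [Hw Hgood]].
  destruct (ALam_edge _ _ _ Hw) as [v Ev].
  set (a := fst w) in *. set (b := Yc alpha w) in *. set (cx := fst v). set (d := Yc alpha v).
  assert (Ha : a <> 0) by (apply HX; auto).
  assert (Hb : b <> 0) by (apply (vec_nz q A alpha hA H); auto).
  assert (Hdet : a * d - b * cx = 1).
  { rewrite <- (Edge_det _ _ _ _ hA Ev). unfold a, b, cx, d, Yc; ring. }
  set (lam := lambda q) in *.
  set (r1 := - cx / (lam * a)). set (r2 := - d / (lam * b)). set (mid := (r1 + r2) / 2).
  set (n := up (mid - 1/2)). destruct (archimed (mid - 1/2)) as [Ar1 Ar2]. fold n in Ar1, Ar2.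
  set (z := IZR n) in *.
  set (vn := vcomb 1 v (z * lam) w).
  assert (Evn : Edge q A w vn) by (apply Edge_Tn; auto).
  assert (HXvn : fst vn = lam * a * (z - r1)).
  { unfold vn, vcomb, r1; simpl; fold cx a. field; split; auto; lra. }
  assert (HYvn : Yc alpha vn = lam * b * (z - r2)).
  { unfold vn; rewrite Yc_comb; fold d b. unfold r2. field; split; auto; lra. }
  clearbody vn.
  assert (Hr : r2 - r1 = - 1 / (lam * a * b)).
  { unfold r1, r2. replace (- d / (lam * b) - - cx / (lam * a)) with ((cx * b - d * a) / (lam * a * b))
      by (field; repeat split; auto; lra).
    replace (cx * b - d * a) with (-1) by nra. reflexivity. }
  set (e := (z - r1) * (z - r2)).
  assert (He : e = (z - mid) * (z - mid) - (r2 - r1) * (r2 - r1) / 4) by (unfold e, mid; field).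
  assert (Hzm : (z - mid) * (z - mid) <= 1/4) by nra.
  set (K := lam * a * b).
  assert (HK : K <> 0).
  { unfold K. apply Rmult_integral_contrapositive; split; [apply Rmult_integral_contrapositive; split; [lra|auto]|auto]. }
  assert (Hr2 : (r2 - r1) * (r2 - r1) = 1 / (K * K)) by (rewrite Hr; fold K; field; auto).
  assert (HKK : 0 < K * K) by nra.
  assert (Hinv : 0 < 1 / (K * K)) by (apply Rdiv_lt_0_compat; lra).
  destruct (Rlt_dec e 0) as [Hneg|Hnn].
  - exists w, vn. split; auto. fold a b. rewrite HXvn, HYvn.
    replace (a * (lam * a * (z - r1)) * b * (lam * b * (z - r2))) with (K * K * e) by (unfold K, e; ring).
    nra.
  - exfalso. apply Rnot_lt_le in Hnn.
    assert (He4 : e < 1/4) by nra.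
    assert (Htw : tt alpha w = Rabs K / lam).
    { unfold tt; fold a b. unfold K. rewrite !Rabs_mult, (Rabs_right lam) by lra. field; lra. }
    assert (Htvn : tt alpha vn = lam * e * Rabs K).
    { unfold tt. rewrite HXvn, HYvn.
      replace (lam * a * (z - r1) * (lam * b * (z - r2))) with ((lam * e) * K) by (unfold K, e; ring).
      rewrite Rabs_mult, Rabs_right; [reflexivity|]. apply Rle_ge; apply Rmult_le_pos; lra. }
    assert (HaK : 0 < Rabs K) by (apply Rabs_pos_lt; auto).
    destruct Hgood as [Hg|Hg].
    + rewrite Htw in Hg.
      assert (Rabs K < 1).
      { apply (Rmult_lt_reg_r (/ lam)). apply Rinv_0_lt_compat; lra.
        unfold Rdiv in Hg; lra. }
      assert (K * K < 1).
      { assert (K * K = Rabs K * Rabs K) by (rewrite <- Rabs_mult; rewrite Rabs_right; nra).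
        nra. }
      assert (1 < 1 / (K * K)).
      { apply (Rmult_lt_reg_r (K * K)); auto. unfold Rdiv. rewrite Rmult_assoc, Rinv_l; lra. }
      nra.
    + specialize (Hg vn (Edge_in2 _ _ _ _ Evn)). rewrite Htw, Htvn in Hg.
      assert (lam * lam / 4 * (Rabs K / lam) = lam / 4 * Rabs K) by (field; lra).
      assert (0 < lam * Rabs K) by (apply Rmult_lt_0_compat; lra).
      assert (0 < (1/4 - e) * (lam * Rabs K)) by (apply Rmult_lt_0_compat; lra).
      lra.
Qed.

Lemma list_min alpha (l : list (R * R)) : exists delta, 0 < delta /\
  forall x, In x l -> Yc alpha x <> 0 -> delta <= Rabs (Yc alpha x).
Proof.
  induction l as [|a l [d [Hd IH]]].
  - exists 1; split; [lra|]. intros x [].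
  - destruct (Req_dec (Yc alpha a) 0) as [Ha|Ha].
    + exists d; split; auto. intros x [<-|Hx] Hnz; [contradiction|auto].
    + exists (Rmin d (Rabs (Yc alpha a))). split.
      * apply Rmin_glb_lt; auto. apply Rabs_pos_lt; auto.
      * intros x [<-|Hx] Hnz. apply Rmin_r. eapply Rle_trans; [apply Rmin_l|auto].
Qed.

Lemma goodP alpha (w : R * R) : 0 < fst w -> Rabs (fst w * Yc alpha w) <= 1/2 ->
  Rabs (alpha - snd w / fst w) <= 1 / (2 * (fst w) ^ 2).
Proof.
  intros Hx H. rewrite Rabs_mult, (Rabs_right (fst w)) in H by lra.
  replace (alpha - snd w / fst w) with (- (Yc alpha w) / fst w) by (unfold Yc; field; lra).
  unfold Rdiv. rewrite Rabs_mult, Rabs_Ropp, Rabs_inv, (Rabs_right (fst w)) by lra.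
  replace (Rabs (Yc alpha w) * / fst w) with ((fst w * Rabs (Yc alpha w)) * / (fst w ^ 2)) by (field; lra).
  replace (1 * / (2 * fst w ^ 2)) with ((1/2) * / (fst w ^ 2)) by (field; lra).
  apply Rmult_le_compat_r; [left; apply Rinv_0_lt_compat; nra | lra].
Qed.

Theorem mainTheorem17 (q : nat) (hq : (3 <= q)%nat) (A : mat2) (hA : in_SL2 A)
  (alpha : R) :
  (exists v : R * R, in_ALambda q A v /\ fst v <> 0 /\ alpha = snd v / fst v)
  \/
  infinitely_many (fun v : R * R =>
    in_ALambda q A v /\ 0 < fst v /\
    Rabs (alpha - snd v / fst v) <= 1 / (2 * (fst v) ^ 2)).
Proof.
  destruct (classic (exists v : R * R, in_ALambda q A v /\ fst v <> 0 /\ alpha = snd v / fst v))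
    as [Hs|Hns]; [left; exact Hs|right].
  assert (H : NonSlope q A alpha).
  { intros v Hv Hx HY. apply Hns. exists v; repeat split; auto. unfold Yc in HY.
    replace (snd v) with (alpha * fst v) by lra. field; auto. }
  assert (Hcross : exists a b, Edge q A a b /\ fst a * fst b * Yc alpha a * Yc alpha b < 0).
  { destruct (classic (exists u0, in_ALambda q A u0 /\ fst u0 = 0)) as [[u0 [Hu0 H0]]|Hno].
    - exact (caseA q A alpha u0 hq hA H Hu0 H0).
    - apply (caseB q A alpha hq hA H). intros w Hw Hx0; apply Hno; eauto. }
  destruct Hcross as [a [b [Eab Hab]]].
  destruct (norm_start q A alpha a b Eab Hab) as [u0 [v0 [E0 [Hu0 [Hv0 Hy0]]]]].
  intros [l Hl].
  destruct (list_min alpha l) as [delta [Hd Hdl]].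
  set (mu := Rmin (fst u0) (fst v0)).
  assert (Hmu : 0 < mu) by (unfold mu; apply Rmin_glb_lt; auto).
  set (B := 3 / (2 * delta * mu)).
  assert (HB : 0 < B) by (unfold B; apply Rdiv_lt_0_compat; nra).
  destruct (archimed B) as [Ar1 _].
  assert (Hup : (0 <= up B)%Z) by (apply le_IZR; lra).
  set (N := Z.to_nat (up B)).
  assert (HN : B < INR N) by (unfold N; rewrite INR_IZR_INZ, Z2Nat.id; auto).
  destruct (chain q A alpha u0 v0 hq hA H E0 Hu0 Hv0 Hy0 N) as [u [v [E [H1 [H2 [H3 H4]]]]]].
  fold mu in H4.
  assert (HS : 3 / (2 * delta) < fst u + fst v).
  { assert (B * mu = 3 / (2 * delta)) by (unfold B; field; lra).
    assert (B * mu < INR N * mu) by (apply Rmult_lt_compat_r; auto). lra. }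
  assert (Hdet : fst u * Yc alpha v - Yc alpha u * fst v = 1).
  { rewrite <- (Edge_det _ _ _ _ hA E). unfold Yc; ring. }
  set (x1 := fst u) in *. set (x2 := fst v) in *. set (y1 := Yc alpha u) in *. set (y2 := Yc alpha v) in *.
  assert (Hy1 : y1 < 0 /\ 0 < y2).
  { destruct (Rlt_dec y1 0). split; auto; nra.
    exfalso. assert (0 < y1) by (assert (y1 <> 0) by (intro Z; rewrite Z in H3; lra); lra).
    assert (y2 < 0) by nra. nra. }
  destruct Hy1 as [Hy1 Hy2].
  assert (HS2 : 3 / 2 < delta * (x1 + x2)).
  { apply (Rmult_lt_compat_l delta) in HS; auto. replace (delta * (3 / (2 * delta))) with (3/2) in HS by (field; lra). lra. }
  assert (Hfin : forall w, in_ALambda q A w -> 0 < fst w -> Rabs (fst w * Yc alpha w) <= 1/2 ->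
     Rabs (Yc alpha w) * (x1 + x2) <= 3/2 -> False).
  { intros w Hw Hxw Hg Hs.
    assert (In w l) by (apply Hl; repeat split; auto; apply goodP; auto).
    assert (Yc alpha w <> 0) by (apply (vec_nz q A alpha hA H); auto).
    pose proof (Hdl w H0 H5). nra. }
  assert (Hprod : (- (x1 * y1)) * (x2 * y2) <= 1/4).
  { replace ((- (x1 * y1)) * (x2 * y2)) with ((x1 * y2) * (- (y1 * x2))) by ring.
    set (P := x1 * y2). set (Q := - (y1 * x2)).
    assert (HPQ : P + Q = 1) by (unfold P, Q; lra).
    assert (0 <= (P - Q) * (P - Q)) by apply (Rle_0_sqr (P - Q)).
    replace (P * Q) with (((P + Q) * (P + Q) - (P - Q) * (P - Q)) / 4) by field.
    rewrite HPQ. lra. }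
  destruct (Rle_dec (- (x1 * y1)) (1/2)) as [Hc|Hc].
  - apply (Hfin u (Edge_in1 _ _ _ _ E) H1).
    + fold x1 y1. rewrite Rabs_left by nra. lra.
    + fold y1. rewrite Rabs_left by lra. nra.
  - apply (Hfin v (Edge_in2 _ _ _ _ E) H2).
    + fold x2 y2. rewrite Rabs_right by nra.
      assert (0 < x2 * y2) by nra. nra.
    + fold y2. rewrite Rabs_right by lra.
      assert (0 < x2 * y2) by nra. nra.
Qed.
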